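(* Let $\mathcal A,\mathcal E\in\mathbb Q^{n\times n\times n_3}$, let $\operatorname{Ind}_{QT}(\mathcal A)=k$ and let $\mathcal A^D$ be the QT-Drazin inverse of $\mathcal A$. Suppose $\mathcal E=\mathcal A*_Q\mathcal A^D*_Q\mathcal E*_Q\mathcal A*_Q\mathcal A^D$, and set $\mathcal B=\mathcal A+\mathcal E$. If $0<\rho_{QT}(\mathcal A^D*_Q\mathcal E)<1$, then \begin{align*} \mathcal A*_Q\mathcal A^D&=\mathcal B*_Q\mathcal B^D,\\ \mathcal B^D-\mathcal A^D&=-\mathcal B^D*_Q\mathcal E*_Q\mathcal A^D=-\mathcal A^D*_Q\mathcal E*_Q\mathcal B^D,\\ \mathcal B^D&=(\mathcal I+\mathcal A^D*_Q\mathcal E)^{-1}*_Q\mathcal A^D=\mathcal A^D*_Q(\mathcal I+\mathcal E*_Q\mathcal A^D)^{-1}, \end{align*} where $\mathcal B^D$ is the QT-Drazin inverse of $\mathcal B$.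
   Context: $\mathbb Q$ denotes the real quaternions with the usual Hamilton multiplication and $|a|=\sqrt{a_0^2+a_1^2+a_2^2+a_3^2}$; $\mathbb C$ is identified with $\{a_0+a_1\mathbf i\}$. Every quaternion array $A=A_0+A_1\mathbf i+A_2\mathbf j+A_3\mathbf k$ (real $A_t$) is written uniquely as $A=A_{\mathbf d}+\mathbf jA_{\mathbf c}$ with $A_{\mathbf d}=A_0+A_1\mathbf i$, $A_{\mathbf c}=A_2-A_3\mathbf i$. For $\mathcal A\in\mathbb Q^{n_1\times n_2\times n_3}$, $\mathcal A^{(s)}=\mathcal A(:,:,s)$. For a complex tensor $\mathcal C$, $\mathtt{bcirc}(\mathcal C)$ is the block circulant matrix with $(p,q)$ block $\mathcal C^{(((p-q)\bmod n_3)+1)}$. $P_{n_3}$ is the permutation matrix with first row $e_1^T$ and $r$-th row $e_{n_3+2-r}^T$ ($r\ge2$). $\mathtt{bcirc_z}(\mathcal A)=\mathtt{bcirc}(\mathcal A_{\mathbf d})+\mathbf j\,\mathtt{bcirc}(\mathcal A_{\mathbf c})(P_{n_3}\otimes I_{n_2})$. $\mathtt{unfold}(\mathcal B)=[\mathcal B^{(1)};\dots;\mathcal B^{(n_3)}]$, $\mathtt{fold}$ its inverse; QT-product $\mathcal A*_Q\mathcal B=\mathtt{fold}(\mathtt{bcirc_z}(\mathcal A)\mathtt{unfold}(\mathcal B))$; identity tensor $\mathcal I$: first frontal slice $I_n$, others zero; $\mathcal A^0=\mathcal I$, $\mathcal A^{k+1}=\mathcal A*_Q\mathcal A^k$; $\mathcal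 M^{-1}$ is the tensor with $\mathcal M*_Q\mathcal M^{-1}=\mathcal M^{-1}*_Q\mathcal M=\mathcal I$. Conjugate transpose: for complex $\mathcal C$, $\mathcal C^*$ has frontal slices $(\mathcal C^{(1)})^*$ and $(\mathcal C^{(n_3+2-s)})^*$ ($s\ge2$); $\mathcal A^*$ is defined by $\mathtt{unfold}(\mathcal A^* )=\mathtt{unfold}(\mathcal A_{\mathbf d}^* )-(P_{n_3}\otimes I_{n_2})\mathtt{unfold}(\mathcal A_{\mathbf c}^* )\mathbf j$; $\mathcal U$ is unitary if $\mathcal U^**_Q\mathcal U=\mathcal U*_Q\mathcal U^*=\mathcal I$. QT-rank: given a QT-SVD $\mathcal A=\mathcal U*_Q\mathcal S*_Q\mathcal V^*$ ($\mathcal U,\mathcal V$ unitary, every frontal slice of $\mathcal S$ diagonal), $\operatorname{rank}_{QT}(\mathcal A)=\#\{i\le\min(n_1,n_2):\|\mathcal S(i,i,:)\|_F>0\}$. QT-index $\operatorname{Ind}_{QT}(\mathcal A)$: least $k\ge0$ with $\operatorname{rank}_{QT}(\mathcal A^{k+1})=\operatorname{rank}_{QT}(\mathcal A^k)$. QT-Drazin inverse of $\mathcal A$ with $\operatorname{Ind}_{QT}(\mathcal A)=k$: $\mathcal X=\mathcal A^D$ with $\mathcal A^k*_Q\mathcal X*_Q\mathcal A=\mathcal A^k$, $\mathcal X*_Q\mathcal A*_Q\mathcal X=\mathcal X$, $\mathcal A*_Q\mathcal X=\mathcal X*_Q\mathcal A$. A right eigenvalue of a square quaternion matrix $M$ is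 $\lambda$ with $Mx=x\lambda$, $x\ne0$; $\rho(M)=\max|\lambda|$; $\rho_{QT}(\mathcal A)=\rho(\mathtt{bcirc_z}(\mathcal A))$. *)

(* Defs.v *)
From mathcomp Require Import all_boot all_order all_algebra.
From mathcomp Require Import classical_sets reals.
Set Implicit Arguments. Unset Strict Implicit. Unset Printing Implicit Defensive.
Import Order.TTheory GRing.Theory Num.Theory.
Local Open Scope ring_scope.

Section Quat.
Variable R : realType.

Record quat := Quat { q0 : R; q1 : R; q2 : R; q3 : R }.

Definition qzero : quat := Quat 0 0 0 0.
Definition qone : quat := Quat 1 0 0 0.
Definition qj : quat := Quat 0 0 1 0.
Definition qadd (a b : quat) : quat :=
  Quat (q0 a + q0 b) (q1 a + q1 b) (q2 a + q2 b) (q3 a + q3 b).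
Definition qopp (a : quat) : quat := Quat (- q0 a) (- q1 a) (- q2 a) (- q3 a).
Definition qsub (a b : quat) : quat := qadd a (qopp b).
Definition qmul (a b : quat) : quat :=
  Quat (q0 a * q0 b - q1 a * q1 b - q2 a * q2 b - q3 a * q3 b)
       (q0 a * q1 b + q1 a * q0 b + q2 a * q3 b - q3 a * q2 b)
       (q0 a * q2 b - q1 a * q3 b + q2 a * q0 b + q3 a * q1 b)
       (q0 a * q3 b + q1 a * q2 b - q2 a * q1 b + q3 a * q0 b).
Definition qnorm2 (a : quat) : R := q0 a ^+ 2 + q1 a ^+ 2 + q2 a ^+ 2 + q3 a ^+ 2.
Definition qnorm (a : quat) : R := Num.sqrt (qnorm2 a).

(* complex numbers are identified with {a0 + a1 i} inside the quaternions *)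
Definition dpart (a : quat) : quat := Quat (q0 a) (q1 a) 0 0.
Definition cpart (a : quat) : quat := Quat (q2 a) (- q3 a) 0 0.
Definition cconj (a : quat) : quat := Quat (q0 a) (- q1 a) 0 0.

Definition qmx (I J : finType) := I -> J -> quat.
Definition qmxmul (I J K : finType) (A : qmx I J) (B : qmx J K) : qmx I K :=
  fun i k => \big[qadd/qzero]_(j : J) qmul (A i j) (B j k).
Definition qmxadd (I J : finType) (A B : qmx I J) : qmx I J :=
  fun i j => qadd (A i j) (B i j).
Definition qmxsub (I J : finType) (A B : qmx I J) : qmx I J :=
  fun i j => qsub (A i j) (B i j).

Definition right_eigenvalue (I : finType) (M : qmx I I) (l : quat) : Prop :=
  exists x : I -> quat, (exists i, x i <> qzero) /\
    forall i, \big[qadd/qzero]_(j : I) qmul (M i j) (x j) = qmul (x i) l.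
Definition qspec_rad (I : finType) (M : qmx I I) : R :=
  sup [set qnorm l | l in [set l | right_eigenvalue M l]].

(* third-order quaternion tensors; the frontal slice index is 0-based *)
Definition qtensor (n1 n2 n3 : nat) := 'I_n1 -> 'I_n2 -> 'I_n3 -> quat.

Definition ord_pos n (p : 'I_n) : (0 < n)%N :=
  leq_ltn_trans (leq0n p) (ltn_ord p).
Definition ordmod n (p : 'I_n) (m : nat) : 'I_n :=
  Ordinal (ltn_pmod m (ord_pos p)).

Definition tdpart n1 n2 n3 (A : qtensor n1 n2 n3) : qtensor n1 n2 n3 :=
  fun i j s => dpart (A i j s).
Definition tcpart n1 n2 n3 (A : qtensor n1 n2 n3) : qtensor n1 n2 n3 :=
  fun i j s => cpart (A i j s).

(* block circulant: block (p,q) is slice ((p - q) mod n3)  (0-based) *)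
Definition bcirc n1 n2 n3 (C : qtensor n1 n2 n3) :
  qmx ('I_n3 * 'I_n1)%type ('I_n3 * 'I_n2)%type :=
  fun a b => C a.2 b.2 (ordmod a.1 (a.1 + n3 - b.1)%N).

(* P_{n3}: first row e_1^T, r-th row e_{n3+2-r}^T (1-based) *)
Definition Pmx n3 : qmx 'I_n3 'I_n3 :=
  fun r q => if val q == ((n3 - r) %% n3)%N then qone else qzero.
Arguments Pmx : clear implicits.
Definition kronI n3 n (M : qmx 'I_n3 'I_n3) : qmx ('I_n3 * 'I_n)%type ('I_n3 * 'I_n)%type :=
  fun a b => if a.2 == b.2 then M a.1 b.1 else qzero.

Definition bcircz n1 n2 n3 (A : qtensor n1 n2 n3) :
  qmx ('I_n3 * 'I_n1)%type ('I_n3 * 'I_n2)%type :=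
  qmxadd (bcirc (tdpart A))
    (fun a b => qmul qj (qmxmul (bcirc (tcpart A)) (kronI (n:=n2) (Pmx n3)) a b)).

Definition tunfold n1 n2 n3 (B : qtensor n1 n2 n3) : qmx ('I_n3 * 'I_n1)%type 'I_n2 :=
  fun a j => B a.2 j a.1.
Definition tfold n1 n2 n3 (M : qmx ('I_n3 * 'I_n1)%type 'I_n2) : qtensor n1 n2 n3 :=
  fun i j s => M (s, i) j.

Definition qtprod n1 n2 n4 n3 (A : qtensor n1 n2 n3) (B : qtensor n2 n4 n3) :
  qtensor n1 n4 n3 := tfold (qmxmul (bcircz A) (tunfold B)).

Definition qtadd n1 n2 n3 (A B : qtensor n1 n2 n3) : qtensor n1 n2 n3 :=
  fun i j s => qadd (A i j s) (B i j s).
Definition qtsub n1 n2 n3 (A B : qtensor n1 n2 n3) : qtensor n1 n2 n3 :=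
  fun i j s => qsub (A i j s) (B i j s).
Definition qtopp n1 n2 n3 (A : qtensor n1 n2 n3) : qtensor n1 n2 n3 :=
  fun i j s => qopp (A i j s).

Definition qtid n n3 : qtensor n n n3 :=
  fun i j s => if (val s == 0%N) && (i == j) then qone else qzero.
Arguments qtid : clear implicits.

Fixpoint qtpow n n3 (A : qtensor n n n3) (k : nat) : qtensor n n n3 :=
  match k with
  | 0 => qtid n n3
  | k'.+1 => qtprod A (qtpow A k')
  end.

Definition qtinverse n n3 (M X : qtensor n n n3) : Prop :=
  qtprod M X = qtid n n3 /\ qtprod X M = qtid n n3.

(* conjugate transpose of a complex tensor (entries in C ⊂ Q):
   slice 1 -> (C^(1))^*, slice s -> (C^(n3+2-s))^*  (1-based) *)
Definition cctrans n1 n2 n3 (C : qtensor n1 n2 n3) : qtensor n2 n1 n3 :=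
  fun i j s => cconj (C j i (ordmod s (n3 - s)%N)).

(* unfold(A^* ) = unfold(A_d^* ) - (P ⊗ I) unfold(A_c^* ) j *)
Definition qtctrans n1 n2 n3 (A : qtensor n1 n2 n3) : qtensor n2 n1 n3 :=
  tfold (qmxsub (tunfold (cctrans (tdpart A)))
           (fun a b => qmul (qmxmul (kronI (n:=n2) (Pmx n3)) (tunfold (cctrans (tcpart A))) a b) qj)).

Definition qtunitary n n3 (U : qtensor n n n3) : Prop :=
  qtprod (qtctrans U) U = qtid n n3 /\ qtprod U (qtctrans U) = qtid n n3.

Definition fdiagonal n1 n2 n3 (S : qtensor n1 n2 n3) : Prop :=
  forall i j s, val i != val j -> S i j s = qzero.

Definition tube_fro n1 n2 n3 (S : qtensor n1 n2 n3) (i : 'I_n1) (j : 'I_n2) : R :=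
  Num.sqrt (\sum_(s : 'I_n3) qnorm2 (S i j s)).

Definition is_rankQT n1 n2 n3 (A : qtensor n1 n2 n3) (r : nat) : Prop :=
  exists (U : qtensor n1 n1 n3) (S : qtensor n1 n2 n3) (V : qtensor n2 n2 n3),
    [/\ qtunitary U, qtunitary V, fdiagonal S,
        A = qtprod (qtprod U S) (qtctrans V) &
        r = #|[pred i : 'I_n1 | [exists j : 'I_n2,
                 (val j == val i) && (0 < tube_fro S i j)]]| ].

Definition same_rankQT n1 n2 n3 (A B : qtensor n1 n2 n3) : Prop :=
  exists r, is_rankQT A r /\ is_rankQT B r.

Definition is_indexQT n n3 (A : qtensor n n n3) (k : nat) : Prop :=
  same_rankQT (qtpow A k.+1) (qtpow A k) /\
  forall m, (m < k)%N -> ~ same_rankQT (qtpow A m.+1) (qtpow A m).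

Definition is_drazinQT n n3 (A : qtensor n n n3) (k : nat) (X : qtensor n n n3) : Prop :=
  [/\ qtprod (qtprod (qtpow A k) X) A = qtpow A k,
      qtprod (qtprod X A) X = X &
      qtprod A X = qtprod X A].

Definition rhoQT n n3 (A : qtensor n n n3) : R := qspec_rad (bcircz A).

End Quat.
Arguments qtid R n n3 : clear implicits.
Arguments Pmx R n3 : clear implicits.

(* Main.v *)
Require Import Defs.
From HB Require Import structures.
From mathcomp Require Import all_boot all_order all_algebra.
From mathcomp Require Import boolp classical_sets reals.
From mathcomp Require Import ring.
Import Order.TTheory GRing.Theory Num.Theory.
Local Open Scope ring_scope.
Set Implicit Arguments. Unset Strict Implicit. Unset Printing Implicit Defensive.

Section Abstract.
Variable Rg : pzRingType.

Lemma drazin_pow (b d : Rg) j : d * b * d = d -> b * d = d * b ->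
  d = d ^+ j.+1 * b ^+ j.
Proof.
move=> H2 H3; have Hdd : d * (d * b) = d by rewrite -H3 mulrA H2.
elim: j => [|j IH]; first by rewrite expr1 expr0 mulr1.
apply/esym; rewrite [d ^+ j.+2]exprSr [b ^+ j.+1]exprS mulrA -(mulrA _ d b) [d ^+ j.+1]exprSr.
by rewrite -(mulrA _ d (d * b)) Hdd -exprSr -IH.
Qed.

Lemma drazin_comm (b d x : Rg) m : b ^+ m * d * b = b ^+ m -> d * b * d = d ->
  b * d = d * b -> x * b = b * x -> x * d = d * x.
Proof.
move=> H1 H2 H3 Hx.
have H1' : b ^+ m.+1 * d = b ^+ m by rewrite exprSr -mulrA H3 mulrA H1.
have H1'' : d * b ^+ m.+1 = b ^+ m.
  by rewrite -H1'; apply: commrX; exact/esym.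
have key : d ^+ m.+1 * b ^+ m.+1 = d * b.
  by rewrite [b ^+ m.+1]exprSr mulrA -(drazin_pow m H2 H3).
have cx j : x * b ^+ j = b ^+ j * x by apply: commrX.
have cdb : d ^+ m.+1 * b ^+ m.+1 = b ^+ m.+1 * d ^+ m.+1.
  apply: commrX; apply/commr_sym/commrX; exact/esym.
have e1 : d * x = d * b * x * d.
  rewrite {1}(drazin_pow m H2 H3) -mulrA -cx mulrA -H1' mulrA.
  by rewrite -(mulrA _ x) cx mulrA key.
have e2 : x * d = d * x * b * d.
  have Hd : d = b ^+ m * d ^+ m.+1.
    rewrite {1}(drazin_pow m H2 H3); apply: commrX; apply/commr_sym/commrX; exact/esym.
  rewrite {1}Hd mulrA cx -H1'' -(mulrA d) -cx mulrA -mulrA -cdb key -H3 mulrA.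
  by [].
by rewrite e1 e2 -(mulrA d b) -Hx mulrA.
Qed.

Lemma drazin_main (A E AD BD : Rg) k m :
  A ^+ k * AD * A = A ^+ k -> AD * A * AD = AD -> A * AD = AD * A ->
  E = A * AD * E * A * AD ->
  (forall w, (1 + AD * E) * w = 0 -> w = 0) ->
  (A + E) ^+ m * BD * (A + E) = (A + E) ^+ m -> BD * (A + E) * BD = BD ->
  (A + E) * BD = BD * (A + E) ->
  (A + E) * BD = A * AD.
Proof.
move=> H1 H2 H3 HE HT.
have [B defB] : exists B, B = A + E by exists (A + E).
have [P defP] : exists P, P = A * AD by exists (A * AD).
rewrite -defB -defP; rewrite -defP in HE => G1 G2 G3.
have AP : A * P = P * A by rewrite defP mulrA -[in RHS]mulrA -H3 mulrA.
have PP : P * P = P by rewrite defP -mulrA [AD * (A * AD)]mulrA H2.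
have HE' : E = P * E * P by rewrite {1}HE defP !mulrA.
have PE : P * E = E by rewrite {1}HE' !mulrA PP -HE'.
have EP : E * P = E by rewrite {1}HE' -mulrA PP -HE'.
have PB : P * B = B * P by rewrite defB mulrDl mulrDr PE EP AP.
have PBD : P * BD = BD * P by apply: (drazin_comm G1 G2 G3).
have ADAP : AD * A * P = P.
  by rewrite defP -H3 mulrA -mulrA -defP PP.
have Cinj : forall w, P * w = w -> B * P * w = 0 -> w = 0.
  move=> w Pw Cw; apply: HT.
  have : AD * (B * P * w) = 0 by rewrite Cw mulr0.
  by move <-; rewrite defB !mulrDl EP mulrDr mul1r !mulrA ADAP Pw.
have PC : P * (B * P) = B * P by rewrite mulrA PB -mulrA PP.
have Cpow : forall j w, P * w = w -> (B * P) ^+ j * w = B ^+ j * w.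
  elim=> [|j IH] w Pw; first by rewrite !expr0.
  rewrite !exprSr -!(mulrA _ _ w) IH; last by rewrite !mulrA PB -(mulrA B P P) PP.
  by rewrite Pw.
have Cpow0 : forall j w, P * w = w -> (B * P) ^+ j * w = 0 -> w = 0.
  elim=> [|j IH] w Pw; first by rewrite expr0 mul1r.
  rewrite exprSr -mulrA => H; apply: Cinj Pw _; apply: IH H.
  by rewrite !mulrA PB -(mulrA B P P) PP.
have DCE : BD * P * (B * P) = BD * B * P.
  by rewrite mulrA -(mulrA BD) PB mulrA -mulrA PP.
have BDBP : BD * B * P = P.
  have PW : P * (BD * B * P - P) = BD * B * P - P.
    by rewrite mulrBr PP -DCE !mulrA PBD -(mulrA BD P P) PP.
  have PW2 := PW; apply/eqP; rewrite -subr_eq0; apply/eqP; apply: (Cpow0 m) PW2 _.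
  rewrite Cpow; last exact: PW.
  by rewrite mulrBr !mulrA G1 subrr.
have N0 : A ^+ k * (1 - P) = 0.
  by rewrite mulrBr mulr1 defP H3 mulrA H1 subrr.
have A1P : A * (1 - P) = (1 - P) * A by rewrite mulrBr mulrBl mulr1 mul1r AP.
have B1P : B * (1 - P) = A * (1 - P).
  by rewrite defB mulrDl [E * _]mulrBr mulr1 EP subrr addr0.
have Bpow : forall j, B ^+ j * (1 - P) = A ^+ j * (1 - P).
  elim=> [|j IH]; first by rewrite !expr0.
  rewrite exprSr -mulrA B1P A1P mulrA IH -mulrA -A1P mulrA -exprSr //.
have BD1P : BD * (1 - P) = 0.
  by rewrite {1}(drazin_pow k G2 G3) -mulrA Bpow N0 mulr0.
have : B * BD * (1 - P) = 0 by rewrite -mulrA BD1P mulr0.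
rewrite mulrBr mulr1 => /eqP; rewrite subr_eq0 => /eqP ->.
by rewrite G3 BDBP.
Qed.

Lemma drazin_final (A E AD BD : Rg) k m :
  A ^+ k * AD * A = A ^+ k -> AD * A * AD = AD -> A * AD = AD * A ->
  E = A * AD * E * A * AD ->
  (forall w, (1 + AD * E) * w = 0 -> w = 0) ->
  (A + E) ^+ m * BD * (A + E) = (A + E) ^+ m -> BD * (A + E) * BD = BD ->
  (A + E) * BD = BD * (A + E) ->
  [/\ A * AD = (A + E) * BD, BD - AD = - (BD * E * AD), BD - AD = - (AD * E * BD),
     exists M, ((1 + AD * E) * M = 1 /\ M * (1 + AD * E) = 1) /\ BD = M * AD &
     exists M, ((1 + E * AD) * M = 1 /\ M * (1 + E * AD) = 1) /\ BD = AD * M].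
Proof.
move=> H1 H2 H3 HE HT G1 G2 G3.
have BB := drazin_main H1 H2 H3 HE HT G1 G2 G3.
have PAD : A * AD * AD = AD by rewrite H3 H2.
have eq2 : AD = BD + BD * E * AD.
  have : BD * (A + E) * AD = AD by rewrite -G3 BB PAD.
  by rewrite mulrDr mulrDl -(mulrA BD A) -BB mulrA G2 => ->.
have eq3 : AD = BD + AD * E * BD.
  have : AD * (A + E) * BD = AD by rewrite -mulrA BB mulrA H2.
  by rewrite mulrDr mulrDl -H3 -BB G3 G2 => ->.
have e2 : BD - AD = - (BD * E * AD) by rewrite {1}eq2 opprD addrA subrr add0r.
have e3 : BD - AD = - (AD * E * BD) by rewrite {1}eq3 opprD addrA subrr add0r.
have f2 : AD - BD * E * AD = BD by rewrite {1}eq2 addrK.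
have f3 : AD - AD * E * BD = BD by rewrite {1}eq3 addrK.
split => //.
- exists (1 - BD * E); split; last by rewrite mulrBl mul1r f2.
  split.
    have h : AD * E - AD * E * (BD * E) = BD * E by rewrite mulrA -mulrBl f3.
    by rewrite mulrDl mul1r mulrBr mulr1 h subrK.
  have h : BD * E + BD * E * (AD * E) = AD * E.
    by rewrite mulrA -mulrDl -eq2.
  by rewrite mulrBl mul1r mulrDr mulr1 h addrK.
- exists (1 - E * BD); split; last by rewrite mulrBr mulr1 mulrA f3.
  split.
    have h : E * AD - E * AD * (E * BD) = E * BD.
      by rewrite -{2}f3 mulrBr !mulrA.
    by rewrite mulrDl mul1r mulrBr mulr1 h subrK.
  have h : E * BD + E * BD * (E * AD) = E * AD.
    by rewrite [in RHS]eq2 mulrDr !mulrA.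
  by rewrite mulrBl mul1r mulrDr mulr1 h addrK.
Qed.
End Abstract.
Section QuatRing.
Variable R : realType.


Lemma quatP (a b : quat R) : q0 a = q0 b -> q1 a = q1 b -> q2 a = q2 b -> q3 a = q3 b -> a = b.
Proof. by case: a => ????; case: b => ???? /= -> -> -> ->. Qed.

HB.instance Definition _ := gen_eqMixin (quat R).
HB.instance Definition _ := gen_choiceMixin (quat R).

Ltac qsolve := repeat (hnf; intro); apply: quatP; simpl; ring.

Lemma qaddA : associative (@qadd R). Proof. qsolve. Qed.
Lemma qaddC : commutative (@qadd R). Proof. qsolve. Qed.
Lemma qadd0 : left_id (qzero R) (@qadd R). Proof. qsolve. Qed.
Lemma qaddN : left_inverse (qzero R) (@qopp R) (@qadd R). Proof. qsolve. Qed.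
Lemma qmulA : associative (@qmul R). Proof. qsolve. Qed.
Lemma qmul1 : left_id (qone R) (@qmul R). Proof. qsolve. Qed.
Lemma qmulr1 : right_id (qone R) (@qmul R). Proof. qsolve. Qed.
Lemma qmulDl : left_distributive (@qmul R) (@qadd R). Proof. qsolve. Qed.
Lemma qmulDr : right_distributive (@qmul R) (@qadd R). Proof. qsolve. Qed.

HB.instance Definition _ := GRing.isPzRing.Build (quat R) qaddA qaddC qadd0 qaddN
  qmulA qmul1 qmulr1 qmulDl qmulDr.

Lemma qmulE (a b : quat R) : qmul a b = a * b. Proof. by []. Qed.
Lemma qaddE (a b : quat R) : qadd a b = a + b. Proof. by []. Qed.
Lemma qoppE (a : quat R) : qopp a = - a. Proof. by []. Qed.
Lemma qzeroE : qzero R = 0. Proof. by []. Qed.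
Lemma qoneE : qone R = 1. Proof. by []. Qed.
Lemma qbig (I : finType) (F : I -> quat R) :
  \big[@qadd R/qzero R]_(j : I) F j = \sum_(j : I) F j.
Proof. by []. Qed.

Definition Dp (a : quat R) := dpart a.
Definition Jp (a : quat R) := Quat 0 0 (q2 a) (q3 a).

Lemma DJ a : Dp a + Jp a = a. Proof. qsolve. Qed.
Lemma qjcE a : qmul (qj R) (cpart a) = Jp a. Proof. qsolve. Qed.
Lemma DpD a b : Dp (a + b) = Dp a + Dp b. Proof. qsolve. Qed.
Lemma JpD a b : Jp (a + b) = Jp a + Jp b. Proof. qsolve. Qed.
Lemma Dp0 : Dp 0 = 0. Proof. qsolve. Qed.
Lemma Jp0 : Jp 0 = 0. Proof. qsolve. Qed.
Lemma Dp1 : Dp 1 = 1. Proof. qsolve. Qed.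
Lemma Jp1 : Jp 1 = 0. Proof. qsolve. Qed.
Lemma DpM u v w : Dp ((Dp u + Jp v) * w) = Dp u * Dp w + Jp v * Jp w. Proof. qsolve. Qed.
Lemma JpM u v w : Jp ((Dp u + Jp v) * w) = Dp u * Jp w + Jp v * Dp w. Proof. qsolve. Qed.
Lemma Dp_sum (I : finType) (F : I -> quat R) : Dp (\sum_i F i) = \sum_i Dp (F i).
Proof. exact: (big_morph Dp DpD Dp0). Qed.
Lemma Jp_sum (I : finType) (F : I -> quat R) : Jp (\sum_i F i) = \sum_i Jp (F i).
Proof. exact: (big_morph Jp JpD Jp0). Qed.

Section Tensor.
Variable m : nat.
Local Notation p := m.+1.

Lemma ordmodE (x y : 'I_p) : ordmod x (x + p - y) = x - y.
Proof.
apply: val_inj => /=; rewrite modnDmr addnBA //; exact: ltnW (ltn_ord y).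
Qed.

Lemma bcircz_entry n1 n2 (A : qtensor R n1 n2 p) x i y j :
  bcircz A (x, i) (y, j) = Dp (A i j (x - y)) + Jp (A i j (x + y)).
Proof.
rewrite /bcircz /qmxadd /= /bcirc /tdpart /=.
rewrite (ordmodE x y) qaddE; congr (_ + _).
rewrite -qjcE; congr (qmul _ _).
rewrite /qmxmul qbig (bigD1 (- y, j)) //= big1 ?addr0.
  rewrite /kronI /Pmx /= eqxx /= /tcpart (ordmodE x (- y)) opprK.
  have -> : (val y == (p - val (- y)) %% p)%N.
    by apply/eqP; rewrite -{1}(opprK y).
  by rewrite qmulE qoneE mulr1.
case=> r l; rewrite /kronI /Pmx /= => Hne.
case: eqP => [El|]; last by rewrite qmulE mulr0.
case: eqP => [Hq|]; last by rewrite qmulE mulr0.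
move: Hne; rewrite El xpair_eqE eqxx andbT => /negP []; apply/eqP.
by rewrite -[r]opprK; congr (- _); apply: val_inj; rewrite /= Hq.
Qed.

Lemma shiftsum (T : finType) (c : 'I_p) (F : 'I_p * T -> quat R) :
  \sum_b F b = \sum_b F (b.1 + c, b.2).
Proof.
rewrite (reindex_inj (h := fun b => (b.1 + c, b.2))) //.
apply: (can_inj (g := fun b => (b.1 - c, b.2))).
by move=> [a1 a2]; congr pair; exact: addrK.
Qed.

Lemma qtprodE n1 n2 n4 (A : qtensor R n1 n2 p) (B : qtensor R n2 n4 p) i l s :
  qtprod A B i l s = \sum_b bcircz A (s, i) b * B b.2 l b.1.
Proof. by []. Qed.

Lemma qtprodE' n1 n2 n4 (A : qtensor R n1 n2 p) (B : qtensor R n2 n4 p) i l s :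
  qtprod A B i l s =
  \sum_b (Dp (A i b.2 (s - b.1)) + Jp (A i b.2 (s + b.1))) * B b.2 l b.1.
Proof. by rewrite qtprodE; apply: eq_bigr => [[r j]] _; rewrite bcircz_entry. Qed.

Lemma bcircz_mul n1 n2 n4 (A : qtensor R n1 n2 p) (B : qtensor R n2 n4 p) x i y l :
  bcircz (qtprod A B) (x, i) (y, l) =
  \sum_b bcircz A (x, i) b * bcircz B b (y, l).
Proof.
rewrite bcircz_entry !qtprodE' Dp_sum Jp_sum.
under [X in X + _]eq_bigr => b _ do rewrite DpM.
under [X in _ + X]eq_bigr => b _ do rewrite JpM.
rewrite [RHS](eq_bigr (fun b => (Dp (A i b.2 (x - b.1)) + Jp (A i b.2 (x + b.1))) *
   (Dp (B b.2 l (b.1 - y)) + Jp (B b.2 l (b.1 + y))))); last first.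
  by case=> r j _; rewrite !bcircz_entry.
under [X in _ = X]eq_bigr => b _ do rewrite mulrDl !mulrDr.
rewrite !big_split /=.
rewrite [X in _ = (X + _) + _](shiftsum y) [X in _ = (_ + X) + _](shiftsum (- y)).
rewrite [X in _ = _ + (X + _)](shiftsum y) [X in _ = _ + (_ + X)](shiftsum (- y)) /=.
rewrite [X in _ = X + _ + _](eq_bigr (fun b => Dp (A i b.2 (x - y - b.1)) * Dp (B b.2 l b.1))); last first.
  by move=> b _; rewrite addrK opprD addrA addrAC.
rewrite [X in _ = _ + X + _](eq_bigr (fun b => Dp (A i b.2 (x + y - b.1)) * Jp (B b.2 l b.1))); last first.
  by move=> b _; rewrite subrK opprB addrA.
rewrite [X in _ = _ + (X + _)](eq_bigr (fun b => Jp (A i b.2 (x + y + b.1)) * Dp (B b.2 l b.1))); last first.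
  by move=> b _; rewrite addrK (addrC b.1) addrA.
rewrite [X in _ = _ + (_ + X)](eq_bigr (fun b => Jp (A i b.2 (x - y + b.1)) * Jp (B b.2 l b.1))); last first.
  by move=> b _; rewrite subrK (addrC b.1) addrA.
set a := \sum__ _; set b := \sum__ _; set c := \sum__ _; set d := \sum__ _.
by rewrite addrACA [b + d]addrC.
Qed.

Lemma bcircz_col0 n1 n2 (B : qtensor R n1 n2 p) s i j :
  bcircz B (s, i) (0, j) = B i j s.
Proof. by rewrite bcircz_entry subr0 addr0 DJ. Qed.

Lemma qtprodA n1 n2 n4 n5 (A : qtensor R n1 n2 p) (B : qtensor R n2 n4 p)
  (C : qtensor R n4 n5 p) : qtprod (qtprod A B) C = qtprod A (qtprod B C).
Proof.
apply: funext => i; apply: funext => l; apply: funext => s.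
rewrite !qtprodE (eq_bigr (fun b => \sum_c bcircz A (s, i) c * bcircz B c b * C b.2 l b.1)); last first.
  by case=> r j _; rewrite bcircz_mul big_distrl.
rewrite exchange_big /=; apply: eq_bigr => c _.
rewrite qtprodE big_distrr /=; apply: eq_bigr => b _.
by rewrite mulrA.
Qed.

Lemma bcircz_id n x i y j :
  bcircz (qtid R n p) (x, i) (y, j) = if (x == y) && (i == j) then 1 else 0.
Proof.
rewrite bcircz_entry /qtid.
have -> : (val (x - y) == 0%N) = (x == y).
  by rewrite -subr_eq0; apply/eqP/eqP => [H|->//]; apply: val_inj.
case: (x == y); case: (i == j) => /=.
all: rewrite ?qoneE ?qzeroE ?Dp1 ?Jp1 ?Dp0 ?Jp0 ?addr0 //.
all: by case: ifP => _; rewrite ?Jp1 ?Jp0 ?addr0 ?add0r.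
Qed.

Lemma qtprod1 n n2 (B : qtensor R n n2 p) : qtprod (qtid R n p) B = B.
Proof.
apply: funext => i; apply: funext => l; apply: funext => s.
rewrite qtprodE (bigD1 (s, i)) //= big1 ?addr0.
  by rewrite bcircz_id !eqxx mul1r.
case=> r j Hne; rewrite bcircz_id.
case: ifP => [/andP [/eqP E1 /eqP E2]|]; last by rewrite mul0r.
by move: Hne; rewrite E1 E2 eqxx.
Qed.

Lemma qtprod1r n1 n (A : qtensor R n1 n p) : qtprod A (qtid R n p) = A.
Proof.
apply: funext => i; apply: funext => l; apply: funext => s.
rewrite qtprodE (bigD1 (0, l)) //= big1 ?addr0.
  by rewrite bcircz_col0 /qtid /= !eqxx qoneE mulr1.
case=> r j Hne /=; rewrite /qtid.
case: ifP => [/andP [/eqP E1 /eqP E2]|]; last by rewrite qzeroE mulr0.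
by move: Hne; rewrite E2 (_ : r = 0) ?eqxx //; apply: val_inj.
Qed.

Lemma bcircz_add n1 n2 (A B : qtensor R n1 n2 p) a b :
  bcircz (qtadd A B) a b = bcircz A a b + bcircz B a b.
Proof.
case: a b => x i [y j]; rewrite !bcircz_entry /qtadd !qaddE DpD JpD.
by rewrite addrACA.
Qed.

Lemma qtprodDl n1 n2 n4 (A B : qtensor R n1 n2 p) (C : qtensor R n2 n4 p) :
  qtprod (qtadd A B) C = qtadd (qtprod A C) (qtprod B C).
Proof.
apply: funext => i; apply: funext => l; apply: funext => s.
rewrite /qtadd !qtprodE qaddE -big_split /=; apply: eq_bigr => b _.
by rewrite bcircz_add mulrDl.
Qed.

Lemma qtprodDr n1 n2 n4 (A : qtensor R n1 n2 p) (B C : qtensor R n2 n4 p) :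
  qtprod A (qtadd B C) = qtadd (qtprod A B) (qtprod A C).
Proof.
apply: funext => i; apply: funext => l; apply: funext => s.
rewrite /qtadd !qtprodE qaddE -big_split /=; apply: eq_bigr => b _.
by rewrite qaddE mulrDr.
Qed.

End Tensor.

Lemma qmulN1 (a : quat R) : qmul a (qopp (qone R)) = qopp a. Proof. qsolve. Qed.

Section TRing.
Variables n m : nat.
Definition QT := qtensor R n n m.+1.
HB.instance Definition _ := gen_eqMixin QT.
HB.instance Definition _ := gen_choiceMixin QT.
Definition tzero : QT := fun _ _ _ => 0.

Ltac tfun := apply: funext => ?; apply: funext => ?; apply: funext => ?.
Lemma taddA : associative (@qtadd R n n m.+1).
Proof. by move=> x y z; tfun; apply: addrA. Qed.
Lemma taddC : commutative (@qtadd R n n m.+1).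
Proof. by move=> x y; tfun; apply: addrC. Qed.
Lemma tadd0 : left_id tzero (@qtadd R n n m.+1).
Proof. by move=> x; tfun; apply: add0r. Qed.
Lemma taddN : left_inverse tzero (@qtopp R n n m.+1) (@qtadd R n n m.+1).
Proof. by move=> x; tfun; apply: addNr. Qed.
Lemma tmulA : associative (@qtprod R n n n m.+1).
Proof. by move=> x y z; rewrite qtprodA. Qed.
Lemma tmul1 : left_id (qtid R n m.+1) (@qtprod R n n n m.+1).
Proof. by move=> x; rewrite qtprod1. Qed.
Lemma tmulr1 : right_id (qtid R n m.+1) (@qtprod R n n n m.+1).
Proof. by move=> x; rewrite qtprod1r. Qed.
Lemma tmulDl : left_distributive (@qtprod R n n n m.+1) (@qtadd R n n m.+1).
Proof. by move=> x y z; rewrite qtprodDl. Qed.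
Lemma tmulDr : right_distributive (@qtprod R n n n m.+1) (@qtadd R n n m.+1).
Proof. by move=> x y z; rewrite qtprodDr. Qed.

HB.instance Definition _ := GRing.isPzRing.Build QT taddA taddC tadd0 taddN
  tmulA tmul1 tmulr1 tmulDl tmulDr.

Lemma qtpowE (A : QT) k : qtpow A k = A ^+ k.
Proof. by elim: k => [|k IH] //=; rewrite exprS -IH. Qed.

Lemma inj_T (X : QT) : 0 < rhoQT X < 1 -> forall W : QT, (1 + X) * W = 0 -> W = 0.
Proof.
move=> /andP [r0 r1] W HW.
have XW : X * W = - W.
  by apply/eqP; rewrite -addr_eq0 addrC -{1}(mul1r W) -mulrDl HW.
apply: contrapT => Wn0.
have [i [l [s Hs]]] : exists i l s, W i l s <> 0.
  apply: contrapT => H; apply: Wn0; tfun; apply: contrapT => H'; apply: H.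
  by do 3 eexists; exact: H'.
pose x (b : 'I_m.+1 * 'I_n) := W b.2 l b.1.
have ev : right_eigenvalue (bcircz X) (qopp (qone R)).
  exists x; split; first by exists (s, i).
  move=> [s' i']; rewrite qmulN1 qbig.
  have := congr1 (fun T : QT => T i' l s') XW; rewrite /=.
  by move=> H; transitivity ((X * W) i' l s'); [by [] | rewrite H].
set S := image (mkset (fun q : quat R => right_eigenvalue (bcircz X) q)) (fun q => qnorm q).
have S1 : S 1.
  exists (qopp (qone R)) => //.
  rewrite /qnorm; have -> : qnorm2 (qopp (qone R)) = 1 by rewrite /qnorm2 /=; ring.
  by rewrite sqrtr1.
have rE : rhoQT X = sup S by [].
case: (pselect (has_ubound S)) => [hub|nhub].
  have := sup_upper_bound (conj (ex_intro _ 1 S1) hub) S1.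
  by rewrite -rE => /(lt_le_trans r1); rewrite ltxx.
move: r0; rewrite rE sup_out ?ltxx //; by case.
Qed.
End TRing.

End QuatRing.

Lemma t0 (R : realType) n1 n2 (X Y : qtensor R n1 n2 0) : X = Y.
Proof. by apply: funext => i; apply: funext => j; apply: funext => -[]. Qed.

Theorem theorem4p4 (R : realType) (n n3 k : nat) (A E AD : qtensor R n n n3) :
  is_indexQT A k ->
  is_drazinQT A k AD ->
  E = qtprod (qtprod (qtprod (qtprod A AD) E) A) AD ->
  0 < rhoQT (qtprod AD E) < 1 ->
  forall (kB : nat) (BD : qtensor R n n n3),
    is_indexQT (qtadd A E) kB ->
    is_drazinQT (qtadd A E) kB BD ->
    [/\ qtprod A AD = qtprod (qtadd A E) BD,
        qtsub BD AD = qtopp (qtprod (qtprod BD E) AD),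
        qtsub BD AD = qtopp (qtprod (qtprod AD E) BD),
        exists M, qtinverse (qtadd (qtid R n n3) (qtprod AD E)) M /\ BD = qtprod M AD &
        exists M, qtinverse (qtadd (qtid R n n3) (qtprod E AD)) M /\ BD = qtprod AD M].
Proof.
case: n3 A E AD => [|m] A E AD _ HD HE Hr kB BD _ HDB.
  split; try exact: t0.
    by exists (qtid R n 0); split; [split|]; exact: t0.
  by exists (qtid R n 0); split; [split|]; exact: t0.
case: HD => D1 D2 D3; case: HDB => G1 G2 G3.
apply: (@drazin_final (QT R n m) A E AD BD k kB).
- by rewrite -qtpowE.
- exact: D2.
- exact: D3.
- exact: HE.
- exact: (inj_T Hr).
- by rewrite -qtpowE.
- exact: G2.
- exact: G3.
Qed.
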